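(* Let $g,h,K$ be parameters and let $a,b,c,d$ be generators of an associative algebra over $\mathbb{C}$ (extended by the parameters) subject to the relations $$ca=ac-gc^2,\quad cb=bc-gdc-hac+ghc^2,\quad cd=dc-hc^2,\quad da=ad-gdc+hac,$$ $$db=bd+g(ad-bc+hac-d^2),\quad ba=ab-h(ad-bc+hac-a^2).$$ Let $T=\begin{pmatrix} a&b\\ c&d\end{pmatrix}$ and $$\hat R(K;g,h)=\begin{pmatrix}1&-hK&hK&ghK\\0&1-K&K&gK\\0&K&1-K&-gK\\0&0&0&1\end{pmatrix},\qquad R=P\hat R(K;g,h).$$ Then for every value of $K$, $$R\,T_1T_2=T_2T_1\,R .$$
   Context: All $4\times4$ matrices are written in the ordered basis $e_1\otimes e_1,\ e_1\otimes e_2,\ e_2\otimes e_1,\ e_2\otimes e_2$ of $\mathbb{C}^2\otimes\mathbb{C}^2$, with double indices $(ij)$ ordered $11,12,21,22$. $P$ is the permutation (flip) matrix, i.e. the $4\times4$ matrix that swaps the second and third basis vectors. $T_1=T\otimes I_2$ and $T_2=I_2\otimes T$, so $T_1T_2$ has entries $(T_1T_2)_{(ij),(kl)}=T_{ik}T_{jl}$ and $T_2T_1$ has entries $(T_2T_1)_{(ij),(kl)}=T_{jl}T_{ik}$ (the entries of $T$ do not commute, so the order of factors matters). The equality is an equality of $4\times 4$ matrices with entries in the algebra. *)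

(* Defs.v *)
From mathcomp Require Import all_boot all_algebra.
Set Implicit Arguments. Unset Strict Implicit. Unset Printing Implicit Defensive.
Import GRing.Theory.
Local Open Scope ring_scope.

(* Basis of C^2 (x) C^2 ordered e1e1, e1e2, e2e1, e2e2; the 4x4 index p
   corresponds to the double index (hi p, lo p) with p = 2*hi p + lo p
   (indices 0-based here). *)
Definition hi (p : 'I_4) : 'I_2 := inord (p %/ 2).
Definition lo (p : 'I_4) : 'I_2 := inord (p %% 2).

Definition T1T2 (A : ringType) (T : 'M[A]_2) : 'M[A]_4 :=
  \matrix_(p, q) (T (hi p) (hi q) * T (lo p) (lo q)).
Definition T2T1 (A : ringType) (T : 'M[A]_2) : 'M[A]_4 :=
  \matrix_(p, q) (T (lo p) (lo q) * T (hi p) (hi q)).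

Definition Tmat (A : ringType) (a b c d : A) : 'M[A]_2 :=
  \matrix_(i, j) (if (i : nat) == 0%N then (if (j : nat) == 0%N then a else b)
                  else (if (j : nat) == 0%N then c else d)).

Definition Pflip (A : ringType) : 'M[A]_4 :=
  \matrix_(p, q) (if (hi p == lo q) && (lo p == hi q) then 1 else 0).

Definition Rhat (A : ringType) (K g h : A) : 'M[A]_4 :=
  \matrix_(p, q)
   match (p : nat), (q : nat) with
   | 0, 0 => 1 | 0, 1 => - (h * K) | 0, 2 => h * K | 0, 3 => g * h * K
   | 1, 1 => 1 - K | 1, 2 => K | 1, 3 => g * K
   | 2, 1 => K | 2, 2 => 1 - K | 2, 3 => - (g * K)
   | 3, 3 => 1
   | _, _ => 0
   end.

Definition Rmat (A : ringType) (K g h : A) : 'M[A]_4 := Pflip A *m Rhat K g h.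

Definition central (A : ringType) (x : A) : Prop := forall y : A, x * y = y * x.

(* Main.v *)
Require Import Defs.
From HB Require Import structures.
From mathcomp Require Import all_boot all_algebra.
Import GRing.Theory.
Local Open Scope ring_scope.
Definition sqz (V : zmodType) := (int * V)%type.
HB.instance Definition _ (V : zmodType) := GRing.Zmodule.on (sqz V).
Section S.
Context (V : zmodType).
Definition sqone : sqz V := (1, 0).
Definition sqmul (x y : sqz V) : sqz V := (x.1 * y.1, x.2 *~ y.1 + y.2 *~ x.1).
Lemma sqmulA : associative sqmul.
Proof. move=> [m x] [n y] [p z]; rewrite /sqmul /=; congr pair; first by rewrite mulrA.
rewrite !mulrzDl -!mulrzA addrA; congr (_ + _ + _); by rewrite mulrC. Qed.
Lemma sqmulC : commutative sqmul.
Proof. by move=> [m x] [n y]; rewrite /sqmul /= mulrC addrC. Qed.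
Lemma sqmul1 : left_id sqone sqmul.
Proof. by move=> [m x]; rewrite /sqmul /= mul1r mul0rz add0r mulr1z. Qed.
Lemma sqmulDl : left_distributive sqmul +%R.
Proof. move=> [m x] [n y] [p z]; rewrite /sqmul /=; congr pair; first by rewrite mulrDl.
by rewrite mulrzDr mulrzDl addrACA. Qed.
Lemma sqone_neq0 : sqone != 0.
Proof. by []. Qed.
End S.
HB.instance Definition _ (V : zmodType) := GRing.Zmodule_isComNzRing.Build (sqz V)
  (@sqmulA V) (@sqmulC V) (@sqmul1 V) (@sqmulDl V) (@sqone_neq0 V).
Definition sqinj (V : zmodType) (x : V) : sqz V := (0, x).
Arguments sqinj {V}.
Lemma sqinj_add (V : zmodType) : {morph (@sqinj V) : x y / x - y}.
Proof. by move=> x y; rewrite /sqinj. Qed.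
HB.instance Definition _ (V : zmodType) := GRing.isZmodMorphism.Build V (sqz V) (@sqinj V) (@sqinj_add V).
From mathcomp Require Import ring.

Ltac abel := match goal with |- ?l = ?r =>
  let H := fresh in assert (H : sqinj l = sqinj r); [ring | exact (congr1 snd H)] end.

Lemma hiE (p : 'I_4) : (hi p : nat) = (p %/ 2)%N.
Proof. by rewrite /hi inordK //; case: p => [[|[|[|[|]]]]]. Qed.
Lemma loE (p : 'I_4) : (lo p : nat) = (p %% 2)%N.
Proof. by rewrite /lo inordK //; case: p => [[|[|[|[|]]]]]. Qed.
Lemma hl_eq (p q : 'I_4) : (hi p == lo q) = ((p %/ 2)%N == (q %% 2)%N).
Proof. by rewrite -val_eqE /= hiE loE. Qed.
Lemma lh_eq (p q : 'I_4) : (lo p == hi q) = ((p %% 2)%N == (q %/ 2)%N).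
Proof. by rewrite -val_eqE /= hiE loE. Qed.

Lemma cswap (A : ringType) (z : A) : central z -> forall u w, u * w * z = u * z * w.
Proof. by move=> cz u w; rewrite -mulrA -cz mulrA. Qed.

Ltac notprod v := lazymatch v with _ * _ => fail | - _ => fail | _ => idtac end.
Ltac ok_swap v z g h K :=
  notprod v;
  first [ (constr_eq z g; assert_fails (constr_eq v g))
        | (constr_eq z h; assert_fails (constr_eq v g); assert_fails (constr_eq v h))
        | (constr_eq z K; assert_fails (constr_eq v g); assert_fails (constr_eq v h);
           assert_fails (constr_eq v K)) ].
Ltac cen z g h K cg ch cK :=
  first [ constr_eq z g; exact cg | constr_eq z h; exact ch | constr_eq z K; exact cK ].
Ltac sortc g h K cg ch cK :=
  repeat match goal with
  | |- context [?u * ?w * ?z] => ok_swap w z g h K;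
      let Hz := fresh in assert (Hz : central z);
      [cen z g h K cg ch cK | rewrite (@cswap _ _ Hz u w); clear Hz]
  | |- context [?w * ?z] => ok_swap w z g h K;
      let Hz := fresh in assert (Hz : central z);
      [cen z g h K cg ch cK | rewrite -(Hz w); clear Hz]
  end.

Theorem mainTheorem2 (A : ringType) (g h K a b c d : A)
  (cg : central g) (ch : central h) (cK : central K)
  (r1 : c * a = a * c - g * c ^+ 2)
  (r2 : c * b = b * c - g * d * c - h * a * c + g * h * c ^+ 2)
  (r3 : c * d = d * c - h * c ^+ 2)
  (r4 : d * a = a * d - g * d * c + h * a * c)
  (r5 : d * b = b * d + g * (a * d - b * c + h * a * c - d ^+ 2))
  (r6 : b * a = a * b - h * (a * d - b * c + h * a * c - a ^+ 2)) :
  Rmat K g h *m T1T2 (Tmat a b c d) = T2T1 (Tmat a b c d) *m Rmat K g h.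
Proof.
apply/matrixP => i j; rewrite !mxE.
rewrite !big_ord_recl big_ord0 !mxE.
rewrite !big_ord_recl !big_ord0 !mxE.
rewrite !hl_eq !lh_eq !hiE !loE /=.
case: i => [[|[|[|[|i]]]] Hi] //; case: j => [[|[|[|[|j]]]] Hj] //=.
all: rewrite ?mul0r ?mulr0 ?addr0 ?add0r ?mul1r ?mulr1.
all: rewrite ?r1 ?r2 ?r3 ?r4 ?r5 ?r6 ?expr2.
all: repeat progress rewrite ?(@mulrDr A) ?(@mulrDl A) ?(@mulrN A) ?(@mulNr A).
all: rewrite ?(@mulrA A).
all: rewrite ?mul1r ?mulr1 ?mul0r ?mulr0.
all: sortc g h K cg ch cK.

all: abel.
Qed.
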